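(* For every $\delta\in\mathbb N$, there exist $\varepsilon > 1/4$ and a blowup $H$ of a 5-cycle with minimum degree at least $\delta$ such that $\sum_{v\in V(H)}1/(d(v) + \varepsilon) > 2$.
   Context: A blowup of a graph $F$ is a graph obtained from $F$ by replacing some vertices with cliques and replacing each edge by the complete bipartite graph between the corresponding vertex sets (i.e., vertices $x$ of $F$ are replaced by pairwise disjoint nonempty cliques $Q_x$, and for each edge $xy$ of $F$ every vertex of $Q_x$ is adjacent to every vertex of $Q_y$, with no other edges). $d(v)$ is the degree of $v$ in $H$. *)

(* Defs.v *)
From HB Require Import structures.
From mathcomp Require Import all_boot all_order all_algebra.
From mathcomp Require Import reals.
Set Implicit Arguments. Unset Strict Implicit. Unset Printing Implicit Defensive.
Import Order.TTheory GRing.Theory Num.Theory.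

Definition c5_adj (i j : 'I_5) : bool :=
  (j == (i.+1 %% 5) :> nat) || (i == (j.+1 %% 5) :> nat).

Definition simple_graph (T : finType) (e : rel T) : Prop :=
  (forall x, ~~ e x x) /\ (forall x y, e x y = e y x).

(* H = (T, e) is a blowup of C5: the vertex classes f^-1(i) (i in C5) are
   pairwise disjoint nonempty cliques (f surjective), classes of adjacent
   vertices of C5 are completely joined, and there are no other edges. *)
Definition blowup_C5 (T : finType) (e : rel T) : Prop :=
  simple_graph e /\
  exists f : T -> 'I_5,
    (forall i : 'I_5, exists x : T, f x = i) /\
    (forall x y : T, x != y -> e x y = (f x == f y) || c5_adj (f x) (f y)).

Definition deg (T : finType) (e : rel T) (v : T) : nat := #|[set y | e v y]|.

(* Main.v *)
Require Import Defs.
From HB Require Import structures.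
From mathcomp Require Import all_boot all_order all_algebra.
From mathcomp Require Import reals.
From mathcomp Require Import zify ring lra.
Import Order.TTheory GRing.Theory Num.Theory.
Set Implicit Arguments. Unset Strict Implicit.
Local Open Scope nat_scope.

Definition nb (i j : 'I_5) : bool := (i == j) || c5_adj i j.
Definition ge (T : finType) (f : T -> 'I_5) : rel T :=
  fun x y => (x != y) && nb (f x) (f y).
Definition cnt (T : finType) (f : T -> 'I_5) (j : 'I_5) : nat := #|[set y | f y == j]|.

Lemma ge_blowup (T : finType) (f : T -> 'I_5) :
  (forall i : 'I_5, exists x : T, f x = i) -> blowup_C5 (ge f).
Proof.
move=> surj; split; first split.
- by move=> x; rewrite /ge eqxx.
- move=> x y; rewrite /ge /nb /c5_adj eq_sym; congr (_ && _).
  by rewrite (eq_sym (f x)); case: (f y == f x); case: (_ == _ :> nat); case: (_ == _ :> nat).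
exists f; split=> // x y nxy; by rewrite /ge nxy.
Qed.

Lemma deg_ge (T : finType) (f : T -> 'I_5) (v : T) :
  (deg (ge f) v).+1 = \sum_(j | nb (f v) j) cnt f j.
Proof.
rewrite /deg.
have -> : [set y | ge f v y] = [set y | nb (f v) (f y)] :\ v.
  by apply/setP=> y; rewrite !inE /ge eq_sym.
rewrite /deg.
have H1 : v \in [set y | nb (f v) (f y)] by rewrite inE /nb eqxx.
have := cardsD1 v [set y | nb (f v) (f y)]; rewrite H1 /= => HH.
rewrite -add1n -HH.
rewrite -sum1_card (partition_big f (fun j => nb (f v) j)) //=.
  apply: eq_bigr=> j hj. rewrite /cnt. transitivity (\sum_(y in [set y | f y == j]) 1); last by rewrite sum1_card.
  apply: eq_bigl=> y.
  rewrite !inE andbC; case: (f y =P j) => [->|] //=.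
by move=> y; rewrite inE.
Qed.

Lemma sum_ge (R : realType) (T : finType) (f : T -> 'I_5) (g : 'I_5 -> R) :
  (\sum_(v : T) g (f v) = \sum_(i : 'I_5) (cnt f i)%:R * g i)%R.
Proof.
rewrite (partition_big f xpredT) //=; apply: eq_bigr=> i _.
rewrite (eq_bigr (fun _ => g i)); last by move=> v /eqP ->.
transitivity (\sum_(v in [set y | f y == i]) g i)%R.
  by apply: eq_bigl=> v; rewrite inE.
by rewrite sumr_const mulr_natl.
Qed.


Definition o0 : 'I_5 := Ordinal (isT : (0 < 5)%N).
Definition o1 : 'I_5 := Ordinal (isT : (1 < 5)%N).
Definition o2 : 'I_5 := Ordinal (isT : (2 < 5)%N).
Definition o3 : 'I_5 := Ordinal (isT : (3 < 5)%N).
Definition o4 : 'I_5 := Ordinal (isT : (4 < 5)%N).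

Section C.
Variable n : nat.
Definition TT := (('I_n * bool) + 'I_3)%type.
Definition fT (x : TT) : 'I_5 :=
  match x with
  | inl (_, b) => if b then o2 else o0
  | inr j => if (j == 0 :> nat) then o1 else if (j == 1 :> nat) then o3 else o4
  end.

Definition cc (i : 'I_5) : nat := if (i == o0) || (i == o2) then n else 1.

Lemma cnt_fT i : cnt fT i = cc i.
Proof.
rewrite /cnt -sum1_card big_mkcond /= big_sumType /=.
under eq_bigr do rewrite inE. under [X in (_ + X)%N]eq_bigr do rewrite inE.
rewrite (eq_bigr (fun p : 'I_n * bool => if fT (inl (p.1, p.2)) == i then 1 else 0)%N); last by case.
rewrite -(pair_bigA _ (fun k b => if fT (inl (k, b)) == i then 1 else 0)%N) /=.
rewrite (eq_bigr (fun _ => ((o2 == i) + (o0 == i))%N)); last by move=> k _; rewrite big_bool /=; case: (o2 == i); case: (o0 == i).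
rewrite sum_nat_const card_ord !big_ord_recl big_ord0 /=.
rewrite /cc; case: i => [[|[|[|[|[|i]]]]] Hi] //=; rewrite ?muln0 ?muln1 ?addn0 //.
Qed.
End C.

Lemma dd_val n i : (\sum_(j | nb i j) cc n j = if i == o1 then (n + n).+1 else n.+2)%N.
Proof.
rewrite big_mkcond /= !big_ord_recl big_ord0 /=.
case: i => [[|[|[|[|[|i]]]]] Hi] //=; rewrite /cc /nb /c5_adj /=; lia.
Qed.

Lemma deg_fT n v : deg (ge (@fT n)) v = if fT v == o1 then (n + n)%N else n.+1.
Proof.
apply: succn_inj; rewrite deg_ge.
rewrite (eq_bigr (cc n)); last by move=> j _; rewrite cnt_fT.
by rewrite dd_val; case: ifP.
Qed.

Local Open Scope ring_scope.
Lemma final (R : realType) (x e : R) : 1 <= x -> e = 1/4 + 1/(8*x) ->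
  2 < x * (1 / ((x + 1) + e)) + 1 * (1 / ((x + x) + e)) + x * (1 / ((x + 1) + e))
      + 1 * (1 / ((x + 1) + e)) + 1 * (1 / ((x + 1) + e)).
Proof.
move=> x1 he.
have x0 : 0 < x by lra.
have he8 : 8 * x * e = 2 * x + 1.
  rewrite he; field; lra.
have e1 : 1/4 < e.
  rewrite he ltrDl divr_gt0 //; lra.
have e2 : e <= 3/8.
  have : 1 / (8 * x) <= 1/8.
    rewrite ler_pdivrMr; last lra.
    rewrite mulrC mulrA; lra.
  lra.
have ha : 0 < x + 1 + e by lra.
have hb : 0 < x + x + e by lra.
have -> : x * (1 / ((x + 1) + e)) + 1 * (1 / ((x + x) + e)) + x * (1 / ((x + 1) + e))
      + 1 * (1 / ((x + 1) + e)) + 1 * (1 / ((x + 1) + e))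
   = ((2 * x + 2) * (x + x + e) + (x + 1 + e)) / ((x + 1 + e) * (x + x + e)).
  field; apply/andP; split; lra.
rewrite ltr_pdivlMr ?mulr_gt0 //.
have : 2 * e * e < e by nra.
nra.
Qed.
Unset Implicit Arguments.
Local Open Scope ring_scope.


Theorem proposition4p2 (R : realType) (delta : nat) :
  exists (eps : R) (T : finType) (e : rel T),
    1 / 4 < eps /\
    blowup_C5 e /\
    (forall v : T, (delta <= deg e v)%N) /\
    2 < \sum_(v : T) 1 / ((deg e v)%:R + eps).
Proof.
set n := delta.+1.
have x1 : 1 <= n%:R :> R by rewrite ler1n.
exists (1/4 + 1/(8 * n%:R)), (TT n), (ge (@fT n)).
split; first by rewrite ltrDl divr_gt0 // mulr_gt0 // (lt_le_trans ltr01 x1).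
split.
  apply: ge_blowup => i.
  have k0 : 'I_n := ord0.
  case: i => [[|[|[|[|[|i]]]]] Hi] //.
  - by exists (inl (k0, false)); apply: val_inj.
  - by exists (inr ord0); apply: val_inj.
  - by exists (inl (k0, true)); apply: val_inj.
  - by exists (inr (lift ord0 ord0)); apply: val_inj.
  - by exists (inr ord_max); apply: val_inj.
split.
  by move=> v; rewrite deg_fT; case: ifP => _; rewrite /n; lia.
pose g := fun i => 1 / ((if i == o1 then (n + n)%N else n.+1)%:R + (1/4 + 1/(8 * n%:R))) : R.
rewrite (eq_bigr (fun v => g (fT v))); last first.
  by move=> v _; rewrite deg_fT.
rewrite (@sum_ge R (TT n) (@fT n) g) /g.
under eq_bigr do rewrite cnt_fT.
rewrite !big_ord_recl big_ord0 /= /cc /=.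
rewrite -[n.+1]addn1 !natrD addr0 !addrA.
have H := final x1 erefl; rewrite !addrA in H; exact: H.
Qed.
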